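(* The oriented chromatic number is unbounded on the asymmetrical digraphs of $\mathcal{LE}_2$: for every positive integer $m$ there is an asymmetrical digraph $D\in\mathcal{LE}_2$ with $\chi_o(D)\geq m$.
   Context: All digraphs are finite, without loops or multiple arcs. A digraph is asymmetrical if it has no pair of opposite arcs $(u,v),(v,u)$. For an asymmetrical digraph $D$, an oriented $k$-colouring is a proper colouring $V(D)\to\{1,\ldots,k\}$ (vertices joined by an arc get distinct colours) such that all arcs between any two colour classes have the same direction; the oriented chromatic number $\chi_o(D)$ is the least such $k$. Paths and cycles are directed; the length of a path or cycle is its number of arcs. A digraph is strong if for every ordered pair of vertices $x,y$ there is a directed path from $x$ to $y$. For a subdigraph $H$ of a digraph $D$, an ear of $H$ in $D$ is either a directed path in $D$ whose two end vertices lie in $H$ and whose internal vertices do not lie in $H$, or a directed cycle in $D$ having exactly one vertex in $H$. An ear decomposition of a strong digraph $D$ is a sequence $(D_0,D_1,\ldots,D_k)$ of strong subdigraphs of $D$ such that $D_0$ is a directed cycle, $D_{j+1}=D_j\cup P_j$ where $P_j$ is an ear of $D_j$ in $D$ for every $j\in\{0,\ldots,k-1\}$, and $D_k=D$. For an integer $i\geq 1$, $\mathcal{LE}_i$ denotes the family of strong digraphs having an ear decomposition in which every ear has length at least $i$. *)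

(* Defs.v *)
From mathcomp Require Import all_boot.
Set Implicit Arguments. Unset Strict Implicit. Unset Printing Implicit Defensive.

Section Digraphs.
Variable T : finType.
Variable E : rel T.

(* no loops (multiple arcs are impossible with a relation) *)
Definition loopless : Prop := forall x, ~~ E x x.

Definition asymmetrical : Prop := forall u v, E u v -> ~~ E v u.

Definition oriented_colouring (k : nat) (c : T -> 'I_k) : Prop :=
  (forall u v, E u v -> c u != c v) /\
  (forall u v x y, E u v -> E x y -> c u = c y -> c v = c x -> False).

Definition subdigraph := ({set T} * {set T * T})%type.

Definition full_digraph : subdigraph := ([set: T], [set a | E a.1 a.2]).

Definition union_sub (H1 H2 : subdigraph) : subdigraph :=
  (H1.1 :|: H2.1, H1.2 :|: H2.2).

Definition strong_sub (H : subdigraph) : bool :=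
  [forall x in H.1, forall y in H.1, connect (fun u v => (u, v) \in H.2) x y].

Definition dpath (s : seq T) : bool :=
  if s is x :: p then [&& p != [::], path E x p & uniq s] else false.

Definition dcycle (s : seq T) : bool :=
  [&& 1 < size s, cycle E s & uniq s].

(* an ear: (true, s) is the cycle s, (false, s) is the path s *)
Definition ear_arcs (e : bool * seq T) : seq (T * T) :=
  if e.1 then zip e.2 (rot 1 e.2) else zip e.2 (behead e.2).

Definition ear_sub (e : bool * seq T) : subdigraph :=
  ([set x in e.2], [set a in ear_arcs e]).

Definition ear_length (e : bool * seq T) : nat :=
  if e.1 then size e.2 else (size e.2).-1.

Definition is_ear (H : subdigraph) (e : bool * seq T) : bool :=
  if e.1 then dcycle e.2 && (#|[set x in e.2] :&: H.1| == 1)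
  else if e.2 is x :: p then
    [&& dpath (x :: p), x \in H.1, last x p \in H.1 &
        all (fun y => y \notin H.1) (behead (belast x p))]
  else false.

Fixpoint ear_decomp_from (i : nat) (H : subdigraph) (es : seq (bool * seq T)) : bool :=
  if es is e :: es' then
    [&& is_ear H e, i <= ear_length e, strong_sub (union_sub H (ear_sub e)) &
        ear_decomp_from i (union_sub H (ear_sub e)) es']
  else H == full_digraph.

Definition in_LE (i : nat) : Prop :=
  strong_sub full_digraph /\
  exists (c0 : seq T) (es : seq (bool * seq T)),
    [&& dcycle c0, strong_sub (ear_sub (true, c0)) & ear_decomp_from i (ear_sub (true, c0)) es].

End Digraphs.

(* Main.v *)
Require Import Defs.
From mathcomp Require Import all_boot zify.
Set Implicit Arguments. Unset Strict Implicit. Unset Printing Implicit Defensive.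

Section Constr.
Variable p : nat.
Definition V := ('I_p.+1 + 'I_p.+1 * 'I_p)%type.
Definition Erel : rel V := fun u v =>
  match u, v with
  | inl a, inl b => b == ordS a
  | inl a, inr q => a == q.1
  | inr q, inl b => b == lift q.1 q.2
  | inr _, inr _ => false
  end.

Lemma val_iter_ordS t (a : 'I_p.+1) : val (iter t (@ordS p.+1) a) = (a + t) %% p.+1.
Proof.
elim: t => [|t IH]; first by rewrite addn0 modn_small.
rewrite iterS /= IH -addn1 modnDml -addnA addn1. by [].
Qed.

Definition Inv (R : seq V) (H : subdigraph V) : Prop :=
  [/\ H.1 = [set v | v \notin R],
      (forall a, a \in H.2 -> Erel a.1 a.2),
      (forall k, (inl k, inl (ordS k)) \in H.2) &
      (forall q, inr q \notin R -> (inl q.1, inr q) \in H.2 /\ (inr q, inl (lift q.1 q.2)) \in H.2)].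

Lemma Inv_strong qs H : Inv (map inr qs) H -> strong_sub H.
Proof.
case=> H1 _ Hsp Hw.
set r := (fun u v => (u, v) \in H.2).
have Hit t a : connect r (inl a) (inl (iter t (@ordS p.+1) a)).
  elim: t => [|t IH] //. rewrite iterS. apply: connect_trans IH _. exact: connect1 (Hsp _).
have to0 a : connect r (inl a) (inl ord0).
  have -> : (ord0 : 'I_p.+1) = iter (p.+1 - a) (@ordS p.+1) a.
    by apply: val_inj; rewrite val_iter_ordS subnKC ?modnn // ltnW.
  exact: Hit.
have from0 a : connect r (inl ord0) (inl a).
  have E0 : a = iter a (@ordS p.+1) ord0.
    by apply: val_inj; rewrite val_iter_ordS add0n modn_small.
  rewrite E0; exact: Hit.
apply/forallP => x; apply/implyP => Hx; apply/forallP => y; apply/implyP => Hy.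
apply: (@connect_trans _ _ (inl ord0)).
- case: x Hx => [a|q] Hx; first exact: to0.
  rewrite H1 inE in Hx. have [_ H2] := Hw q Hx.
  apply: connect_trans (connect1 H2) (to0 _).
- case: y Hy => [a|q] Hy; first exact: from0.
  rewrite H1 inE in Hy. have [H2 _] := Hw q Hy.
  apply: connect_trans (from0 _) (connect1 H2).
Qed.
End Constr.
Section S.
Variable p : nat.
Definition ear (q : 'I_p.+1 * 'I_p) : bool * seq (V p) :=
  (false, [:: inl q.1; inr q; inl (lift q.1 q.2)]).

Lemma Inv_full H : Inv [::] H -> H = full_digraph (@Erel p).
Proof.
case: H => H1 H2. case => /= HH1 Hall Hsp Hw. subst H1.
rewrite /full_digraph; congr pair.
apply/setP => -[u v]; rewrite inE; apply/idP/idP => [/Hall //|].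
case: u => [a|q]; case: v => [b|q'] //=.
- by move/eqP ->.
- by move/eqP ->; case: (Hw q') => //.
- by move/eqP ->; case: (Hw q) => //.
Qed.

Lemma notin_inl (a : 'I_p.+1) qs : (inl a \notin [seq (@inr 'I_p.+1 _) i | i <- qs :> seq ('I_p.+1 * 'I_p)]) = true.
Proof. by apply/idP/mapP => -[]. Qed.

Lemma ears_ok qs H : uniq qs -> Inv (map inr qs) H ->
  ear_decomp_from (@Erel p) 2 H (map ear qs).
Proof.
elim: qs H => [|q qs IH] H /=.
  by move=> _ /Inv_full ->.
case/andP => qnotin Uqs [H1 Hall Hsp Hw].
have HI : Inv (map inr qs) (union_sub H (ear_sub (ear q))).
  split.
  - rewrite /= H1; apply/setP => v; rewrite !inE.
    case: (eqVneq v (inr q)) => [->|hne] /=; first by rewrite mem_map //; exact: inr_inj.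
    case: (boolP (v \in _)) => hv //=.
    by case/mapP: hv => i _ ->.
  - move=> a; rewrite /= !inE; case/orP; first exact: Hall.
    by case/orP => /eqP -> /=.
  - by move=> k; rewrite /= inE Hsp.
  - move=> q0 hq0; rewrite /= !inE.
    case: (eqVneq q0 q) => [->|hne]; first by rewrite /ear_arcs /= !eqxx !orbT.
    have hq : (inr q0 : V p) \notin (inr q :: [seq inr i | i <- qs] : seq (V p)).
      rewrite in_cons negb_or hq0 andbT; apply/eqP => -[]; exact/eqP.
    by case: (Hw q0 hq) => -> ->.
apply/and3P; split.
- rewrite /is_ear /= H1 !inE /= !eqxx /= !notin_inl /= !andbT.
  apply/eqP => -[] /eqP; exact/negP/neq_lift.
- exact: Inv_strong HI.
- exact: IH HI.
Qed.
End S.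

Lemma cycle_zip (T : eqType) (e : rel T) s :
  cycle e s = all (fun a => e a.1 a.2) (zip s (rot 1 s)).
Proof.
case: s => [//|x q]; rewrite rot1_cons /=.
have H1 : forall y r, path e y r = all (fun a => e a.1 a.2) (zip (y :: r) r).
  by move=> y r; elim: r y => [//|z r IH] y /=; rewrite IH.
have H2 : forall (s : seq T) (t : seq T) y, size s = size t -> zip (rcons s y) t = zip s t.
  by elim=> [|z s IH] [|w t] y //= [] /IH ->.
by rewrite H1 -rcons_cons H2 // size_rcons.
Qed.

Lemma zip_map2 (A B C : Type) (f : A -> B) (g : A -> C) s :
  zip (map f s) (map g s) = map (fun x => (f x, g x)) s.
Proof. by elim: s => //= x s ->. Qed.

Section S.
Variable p : nat.

Lemma rot1_enum : rot 1 (enum 'I_p.+1) = map (@ordS p.+1) (enum 'I_p.+1).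
Proof.
apply: (inj_map val_inj); rewrite map_rot val_enum_ord.
have -> : [seq val i | i <- map (@ordS p.+1) (enum 'I_p.+1)] = [seq k.+1 %% p.+1 | k <- map val (enum 'I_p.+1)] by rewrite -!map_comp.
rewrite val_enum_ord.
have E1 : iota 0 p.+1 = 0 :: iota 1 p by [].
have E2 : iota 0 p.+1 = rcons (iota 0 p) p by rewrite -addn1 iotaD add0n cats1.
rewrite {1}E1 E2 rot1_cons map_rcons modnn; congr rcons.
rewrite (iotaDl 1 0); apply/eq_in_map => k; rewrite mem_iota /= => hk.
by rewrite modn_small // add1n ltnS.
Qed.
Definition c0 : seq (V p) := map inl (enum 'I_p.+1).

Lemma arcs_c0 : ear_arcs (true, c0) = map (fun k => (inl k, inl (ordS k))) (enum 'I_p.+1).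
Proof. by rewrite /ear_arcs /= /c0 -map_rot rot1_enum -(map_comp inl (@ordS _)) zip_map2. Qed.

Lemma dcycle_c0 : 0 < p -> dcycle (@Erel p) c0.
Proof.
move=> p0; have := arcs_c0; rewrite /ear_arcs /= => HA.
rewrite /dcycle cycle_zip HA.
rewrite /c0 size_map size_enum_ord ltnS p0 /=.
rewrite map_inj_uniq ?enum_uniq ?andbT; last exact: inl_inj.
apply/allP => a /mapP [k _ ->] /=; exact: eqxx.
Qed.

Definition R0 : seq (V p) := map inr (enum {: 'I_p.+1 * 'I_p}).

Lemma Inv_c0 : Inv R0 (ear_sub (true, c0)).
Proof.
split.
- apply/setP => v; rewrite !inE /R0 /c0; case: v => [a|q].
  + by rewrite notin_inl map_f // mem_enum.
  + rewrite map_f ?mem_enum //=; apply/negbTE/negP => /mapP [? _] //.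
- by move=> e; rewrite /= inE arcs_c0 => /mapP [k _ ->] /=.
- by move=> k; rewrite /= inE arcs_c0 map_f // mem_enum.
- by move=> q; rewrite /R0 map_f // mem_enum.
Qed.

Lemma Inv_full0 : Inv [::] (full_digraph (@Erel p)).
Proof.
split.
- by apply/setP => v; rewrite !inE.
- by move=> e; rewrite /= inE.
- by move=> k; rewrite inE /= eqxx.
- by move=> q _; rewrite !inE /= !eqxx.
Qed.

End S.

Theorem mainTheorem19 :
  forall m : nat, 0 < m ->
  exists (T : finType) (E : rel T),
    [/\ loopless E, asymmetrical E, in_LE E 2 &
        forall (k : nat) (c : T -> 'I_k), oriented_colouring E c -> m <= k].
Proof.
move=> m m0; exists (V m.+1), (@Erel m.+1); split.
- case=> [a|q] //=; apply/negP => /eqP/(congr1 val) /=.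
  move=> E; have ha := ltn_ord a; case: (ltngtP a.+1 m.+2) => h; [rewrite modn_small in E; lia | lia | rewrite h modnn in E; lia].
- case=> [a|q] [b|q'] //=.
  + move=> /eqP -> ; apply/negP => /eqP/(congr1 val) E.
    have E2 : nat_of_ord (ordS (ordS a)) = (nat_of_ord a + 2) %% m.+2 := val_iter_ordS 2 a.
    have E' : nat_of_ord a = nat_of_ord (ordS (ordS a)) := E.
    rewrite -E' in E2; have ha := ltn_ord a.
    case: (ltnP (a + 2) m.+2) => h.
    * rewrite modn_small in E2 => //; lia.
    * have Ex : a + 2 = (a + 2 - m.+2) + m.+2 by lia.
      rewrite Ex modnDr modn_small in E2; lia.
  + move=> /eqP ->; apply/negP => /eqP E1.
    by move: (neq_lift q'.1 q'.2); rewrite -E1 eqxx.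
  + move=> /eqP ->; apply/negP => /eqP E1.
    by move: (neq_lift q.1 q.2); rewrite E1 eqxx.
- split; first exact: (@Inv_strong m.+1 [::] _ (Inv_full0 m.+1)).
  exists (c0 m.+1), (map (@ear m.+1) (enum {: 'I_m.+2 * 'I_m.+1})).
  rewrite dcycle_c0 //= (@Inv_strong m.+1 (enum {: 'I_m.+2 * 'I_m.+1}) _ (Inv_c0 m.+1)) /=.
  apply: ears_ok; first exact: enum_uniq.
  exact: Inv_c0.
- move=> k c [_ Hc].
  have inj : injective (fun a : 'I_m.+2 => c (inl a)).
    move=> a b hab; case: (eqVneq a b) => // hne; exfalso.
    have [j Eb _] := unlift_some hne; subst b.
    apply: (Hc (inl a) (inr (a, j)) (inr (a, j)) (inl (lift a j))) => //=.
  have := leq_card _ inj; rewrite !card_ord => /ltnW /ltnW. done.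
Qed.
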